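(* Let $n,m\ge1$. Let $A\in\mathbb{R}^{n\times nm}$ and $C\in\mathbb{R}^{m\times nm}$ be random matrices. Let $D\in\mathbb{R}^{nm\times nm}$ be a fixed diagonal matrix with all diagonal entries nonzero, and let $w\in\mathbb{R}^{nm}$ be a fixed nonzero vector. Set $B=(AD)\odot C\in\mathbb{R}^{nm\times nm}$. Then, with probability $1$, $B$ is invertible and, for every $i\in[nm]$, $\langle (B^{-1})_i,w\rangle\neq0$, where $(B^{-1})_i$ denotes the $i$-th row of $B^{-1}$.
   Context: ''Random'' matrices have independent, identically distributed entries drawn from a continuous distribution, independently of each other. For $A\in\mathbb{R}^{n\times N}$ and $C\in\mathbb{R}^{m\times N}$, the Khatri–Rao product $A\odot C\in\mathbb{R}^{nm\times N}$ is the matrix whose $k$-th column is the Kronecker product $A_k\otimes C_k$ of the $k$-th columns of $A$ and $C$. *)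

(* Defs.v *)
From HB Require Import structures.
From mathcomp Require Import all_boot all_order all_algebra.
From mathcomp Require Import all_classical all_reals all_analysis.
Set Implicit Arguments. Unset Strict Implicit. Unset Printing Implicit Defensive.
Import Order.TTheory GRing.Theory Num.Theory.
Local Open Scope ring_scope.
Local Open Scope classical_set_scope.

(* Row index r of 'I_(n*m) corresponds to the pair (i,j) with r = i*m + j
   (lexicographic order, the Kronecker-product convention; same indexing as
   mathcomp's mxvec_index). *)
Definition kr_pair (n m : nat) (r : 'I_(n * m)) : 'I_n * 'I_m :=
  enum_val (cast_ord (esym (mxvec_cast n m)) r).

(* Khatri-Rao product: column k of (A ⊙ C) is A_k ⊗ C_k. *)
Definition khatri_rao (R : pzRingType) (n m N : nat)
    (A : 'M[R]_(n, N)) (C : 'M[R]_(m, N)) : 'M[R]_(n * m, N) :=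
  \matrix_(r < n * m, k < N) (A (kr_pair r).1 k * C (kr_pair r).2 k).

Definition mutually_independent {d} (T : measurableType d) (R : realType)
    (P : probability T R) (I : finType) (X : I -> T -> R) : Prop :=
  forall B : I -> set R, (forall i, measurable (B i)) ->
    P (\bigcap_(i in [set: I]) (X i @^-1` B i)) =
    (\prod_(i : I) P (X i @^-1` B i))%E.

Definition same_law {d} (T : measurableType d) (R : realType)
    (P : probability T R) (X Y : T -> R) : Prop :=
  forall B : set R, measurable B -> P (X @^-1` B) = P (Y @^-1` B).

Definition continuous_law {d} (T : measurableType d) (R : realType)
    (P : probability T R) (X : T -> R) : Prop :=
  forall x : R, P (X @^-1` [set x]) = 0%E.

(* Main.v *)
Require Import Defs.
From HB Require Import structures.
From mathcomp Require Import all_boot all_order all_algebra.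
From mathcomp Require Import all_classical all_reals all_analysis.
Import Order.TTheory GRing.Theory Num.Theory.
Local Open Scope ring_scope.
Local Open Scope classical_set_scope.
Section PolyTheory.
Variable R : realType.

Fixpoint Poly (k : nat) (f : (nat -> R) -> R) : Prop :=
  match k with
  | 0 => exists c, forall x, f x = c
  | k'.+1 => exists d (q : nat -> (nat -> R) -> R),
      (forall j, Poly k' (q j)) /\
      forall x, f x = \sum_(j < d) q j x * x k' ^+ j
  end.

Lemma Poly_ext k f g : (forall x, f x = g x) -> Poly k f -> Poly k g.
Proof.
case: k => [|k] fg.
  by move=> [c Hc]; exists c => x; rewrite -fg.
by move=> [d [q [Hq E]]]; exists d, q; split => // x; rewrite -fg.
Qed.

Lemma Poly_cst k c : Poly k (fun _ => c).
Proof.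
elim: k => [|k IH]; first by exists c.
exists 1%N, (fun _ _ => c); split => // x.
by rewrite big_ord1 expr0 mulr1.
Qed.

Lemma Poly_lift k f : Poly k f -> Poly k.+1 f.
Proof.
move=> Hf; exists 1%N, (fun _ => f); split => // x.
by rewrite big_ord1 expr0 mulr1.
Qed.

Lemma Poly_term k h e : Poly k h -> Poly k.+1 (fun x => h x * x k ^+ e).
Proof.
move=> Hh; exists e.+1, (fun j => if j == e then h else (fun _ => 0)); split.
  by move=> j; case: (j == e) => //; exact: Poly_cst.
move=> x; rewrite big_ord_recr /= eqxx big1 ?add0r // => i _.
by rewrite (ltn_eqF (ltn_ord i)) mul0r.
Qed.

Lemma pad_sum d D (F : nat -> R) (y : nat -> R) : (d <= D)%N ->
  \sum_(j < D) (if (j < d)%N then F j else 0) * y j = \sum_(j < d) F j * y j.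
Proof.
move=> dD; rewrite (big_ord_widen D (fun j => F j * y j) dD) [RHS]big_mkcond /=.
by apply: eq_bigr => j _; case: ifP => //; rewrite mul0r.
Qed.

Lemma Poly_add k f g : Poly k f -> Poly k g -> Poly k (fun x => f x + g x).
Proof.
elim: k f g => [|k IH] f g.
  by move=> [c1 E1] [c2 E2]; exists (c1 + c2) => x; rewrite E1 E2.
move=> [d1 [q1 [H1 E1]]] [d2 [q2 [H2 E2]]].
exists (maxn d1 d2), (fun j x => (if (j < d1)%N then q1 j x else 0) +
   (if (j < d2)%N then q2 j x else 0)); split.
  move=> j; apply: IH.
    apply: (@Poly_ext _ (if (j < d1)%N then q1 j else fun _ => 0)).
      by move=> x; case: ifP.
    by case: ifP => _; [exact: H1|exact: Poly_cst].
  apply: (@Poly_ext _ (if (j < d2)%N then q2 j else fun _ => 0)).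
    by move=> x; case: ifP.
  by case: ifP => _; [exact: H2|exact: Poly_cst].
move=> x; rewrite E1 E2.
rewrite [RHS](eq_bigr _ (fun j _ => mulrDl _ _ _)).
rewrite big_split /= (pad_sum _ _ (fun j => q1 j x) (fun j => x k ^+ j)) ?leq_maxl //.
by rewrite (pad_sum _ _ (fun j => q2 j x) (fun j => x k ^+ j)) ?leq_maxr.
Qed.

Lemma Poly_sum k (I : Type) (r : seq I) (P : pred I) (F : I -> (nat -> R) -> R) :
  (forall i, Poly k (F i)) -> Poly k (fun x => \sum_(i <- r | P i) F i x).
Proof.
move=> HF; elim: r => [|a r IH].
  by apply: (@Poly_ext _ (fun _ => 0)); [move=> x; rewrite big_nil|exact: Poly_cst].
case Pa: (P a).
  apply: (@Poly_ext _ (fun x => F a x + \sum_(i <- r | P i) F i x)).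
    by move=> x; rewrite big_cons Pa.
  exact: Poly_add.
by apply: (Poly_ext _ _ _ _ IH) => x; rewrite big_cons Pa.
Qed.

Lemma Poly_mul k f g : Poly k f -> Poly k g -> Poly k (fun x => f x * g x).
Proof.
elim: k f g => [|k IH] f g.
  by move=> [c1 E1] [c2 E2]; exists (c1 * c2) => x; rewrite E1 E2.
move=> [d1 [q1 [H1 E1]]] [d2 [q2 [H2 E2]]].
apply: (@Poly_ext _ (fun x => \sum_(a < d1) \sum_(b < d2)
   ((q1 a x * q2 b x) * x k ^+ (a + b)))).
  move=> x; rewrite E1 E2 mulr_suml; apply: eq_bigr => a _.
  rewrite mulr_sumr; apply: eq_bigr => b _.
  by rewrite exprD mulrACA.
apply: Poly_sum => a; apply: Poly_sum => b; apply: Poly_term; exact: IH (H1 a) (H2 b).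
Qed.

Lemma Poly_prod k (I : Type) (r : seq I) (P : pred I) (F : I -> (nat -> R) -> R) :
  (forall i, Poly k (F i)) -> Poly k (fun x => \prod_(i <- r | P i) F i x).
Proof.
move=> HF; elim: r => [|a r IH].
  by apply: (@Poly_ext _ (fun _ => 1)); [move=> x; rewrite big_nil|exact: Poly_cst].
case Pa: (P a).
  apply: (@Poly_ext _ (fun x => F a x * \prod_(i <- r | P i) F i x)).
    by move=> x; rewrite big_cons Pa.
  exact: Poly_mul.
by apply: (Poly_ext _ _ _ _ IH) => x; rewrite big_cons Pa.
Qed.

Lemma Poly_var k i : (i < k)%N -> Poly k (fun x => x i).
Proof.
elim: k => [//|k IH]; rewrite ltnS leq_eqVlt => /orP[/eqP->|ik].
  apply: (@Poly_ext _ (fun x => 1 * x k ^+ 1)); first by move=> x; rewrite mul1r.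
  apply: Poly_term; exact: Poly_cst.
exact/Poly_lift/IH.
Qed.

Lemma Poly_det k p (M : (nat -> R) -> 'M[R]_p) :
  (forall i j, Poly k (fun x => M x i j)) -> Poly k (fun x => \det (M x)).
Proof.
move=> HM; rewrite /determinant; apply: Poly_sum => s.
apply: Poly_mul; first exact: Poly_cst.
by apply: Poly_prod => i; exact: HM.
Qed.

End PolyTheory.
Arguments Poly {R}.

Lemma Poly_meas (R : realType) d0 (T0 : measurableType d0) k f (X : nat -> T0 -> R) :
  Poly k f -> (forall i, (i < k)%N -> measurable_fun setT (X i)) ->
  measurable_fun setT (fun t => f (fun i => X i t)).
Proof.
elim: k f => [|k IH] f.
  move=> [c Hc] _; rewrite (_ : (fun t => _) = fun _ => c); last first.
    by apply/funext => t; rewrite Hc.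
  exact: measurable_cst.
move=> [dd [q [Hq E]]] mX.
rewrite (_ : (fun t => _) = fun t => \sum_(j < dd) q j (fun i => X i t) * X k t ^+ j);
  last by apply/funext => t; rewrite E.
apply: measurable_sum => j; apply: measurable_realfun.measurable_funM.
  by apply: IH; [exact: Hq|move=> i ik; apply: mX; exact: ltnW].
by apply: measurable_realfun.measurable_funX; apply: mX.
Qed.

Lemma finite_roots (R : realType) (p : {poly R}) : p != 0 ->
  exists s : seq R, forall z, root p z -> z \in s.
Proof.
move: {2}(size p) (leqnn (size p)) => n; elim: n p => [|n IH] p.
  by rewrite leqn0 size_poly_eq0 => /eqP ->; rewrite eqxx.
move=> sp p0; case: (pselect (exists a, root p a)); last first.
  by move=> H; exists [::] => z rz; exfalso; apply: H; exists z.
move=> [a /factor_theorem [q Hq]].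
have q0 : q != 0 by apply: contraNneq p0 => q0; rewrite Hq q0 mul0r.
have sq : (size q <= n)%N.
  move: sp; rewrite Hq size_Mmonic ?monicXsubC // size_XsubC addn2 /=.
  by [].
have [s Hs] := IH q sq q0; exists (a :: s) => z.
rewrite Hq rootM root_XsubC in_cons => /orP [/Hs ->|->]; by rewrite ?orbT.
Qed.

Lemma measure_seq0 (R : realType) (mu : {measure set R -> \bar R}) :
  (forall z, mu [set z] = 0%E) -> forall s : seq R, mu [set z | z \in s] = 0%E.
Proof.
move=> h; elim => [|a s IH].
  by rewrite (_ : [set z | z \in [::]] = set0) ?measure0 //; apply/seteqP; split.
have mfin : forall s : seq R, measurable [set z | z \in s].
  elim => [|b s' IHs]; first by rewrite (_ : [set z | z \in [::]] = set0) //; apply/seteqP; split.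
  rewrite (_ : [set z | z \in b :: s'] = [set b] `|` [set z | z \in s']).
    by apply: measurableU => //; exact: measurable_set1.
  apply/seteqP; split => z /=; rewrite in_cons.
    by case/orP => [/eqP ->|]; [left|right].
  by case => [->|->]; rewrite ?eqxx ?orbT.
apply/eqP; rewrite eq_le measure_ge0 andbT.
rewrite (_ : [set z | z \in a :: s] = [set a] `|` [set z | z \in s]).
  have E : (mu [set a] + mu [set z | z \in s] = 0)%E by rewrite (h a) IH adde0.
  by rewrite -E; exact: (measureU2 mu (measurable_set1 a) (mfin s)).
apply/seteqP; split => z /=; rewrite in_cons.
  by case/orP => [/eqP ->|]; [left|right].
by case => [->|->]; rewrite ?eqxx ?orbT.
Qed.

Section FubiniStep.
Variables (R : realType) (d : measure_display) (T : measurableType d)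
  (P : probability T R).
Variable G : set (set T).
Hypothesis GM : forall A, G A -> measurable A.
Hypothesis GI : setI_closed G.
Variable Z : T -> R.
Hypothesis mZ : measurable_fun setT Z.
Hypothesis indepG : forall A B, G A -> measurable B ->
  P (A `&` Z @^-1` B) = (P A * P (Z @^-1` B))%E.
Hypothesis atomless : forall z, P (Z @^-1` [set z]) = 0%E.

Local Notation T' := (g_sigma_algebraType G).

Lemma sG_meas A : <<s G >> A -> measurable A.
Proof.
apply: smallest_sub; first exact: sigma_algebra_measurable.
exact: GM.
Qed.

Lemma mZB B : measurable B -> measurable (Z @^-1` B).
Proof. by move=> mB; rewrite -[X in measurable X]setTI; apply: mZ. Qed.

Lemma indep_sigma A B : <<s G >> A -> measurable B ->
  P (A `&` Z @^-1` B) = (P A * P (Z @^-1` B))%E.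
Proof.
move=> sA mB; have mB' := mZB B mB.
apply: (@dynkin_induction _ T' G
  (fun A => P (A `&` Z @^-1` B) = (P A * P (Z @^-1` B))%E)) => //.
- by rewrite setTI probability_setT mul1e.
- by move=> C GC; exact: indepG.
- move=> S mS HS; have mS' := sG_meas S mS.
  have E : P (Z @^-1` B `\` S) = (P (Z @^-1` B) - P (S `&` Z @^-1` B))%E.
    rewrite setIC; apply: measureD => //.
    by rewrite (le_lt_trans (probability_le1 _ _)) ?ltry.
  rewrite probability_setC // setIC -setDE E HS.
  have fa : P S \is a fin_num by rewrite fin_num_measure.
  have fb : P (Z @^-1` B) \is a fin_num by rewrite fin_num_measure.
  rewrite -(fineK fa) -(fineK fb) -EFinM -EFinB -EFinB -EFinM.
  by congr (_%:E); rewrite mulrBl mul1r.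
- move=> F mF tF HF.
  have mF' n : d.-measurable (F n : set T) by exact: (sG_meas _ (mF n)).
  rewrite setI_bigcupl.
  have m1 : forall i, [set: nat] i -> d.-measurable ((F i : set T) `&` Z @^-1` B).
    by move=> i _; apply: measurableI; [exact: mF'|exact: mB'].
  have t1 : trivIset [set: nat] (fun i => (F i : set T) `&` Z @^-1` B).
    exact: (@trivIset_setIr T nat setT F (fun _ => Z @^-1` B) tF).
  rewrite (measure_bigcup P _ _ m1 t1).
  have m2 : forall i, [set: nat] i -> d.-measurable (F i : set T) by [].
  rewrite (measure_bigcup P _ _ m2 tF).
  rewrite (eq_eseriesr (fun i _ => HF i)).
  have fb : P (Z @^-1` B) \is a fin_num by rewrite fin_num_measure.
  rewrite -(fineK fb).
  rewrite (eq_eseriesr (fun i _ => muleC (P (F i)) _)).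
  rewrite nneseriesZl; first by rewrite muleC.
  by move=> i _; exact: measure_ge0.
Qed.

Definition idT (t : T) : T' := t.

Lemma mid : measurable_fun setT idT.
Proof. by move=> _ A mA; rewrite setTI; exact: (sG_meas _ mA). Qed.

Definition phi (t : T) : (T' * R)%type := (idT t, Z t).

Lemma mphi : measurable_fun setT phi.
Proof. exact: measurable_fun_pair mid mZ. Qed.

Definition P1 := distribution P (mfun_Sub (mem_set mid)).
Definition P2 := distribution P (mfun_Sub (mem_set mZ)).
Definition nu := distribution P (mfun_Sub (mem_set mphi)).

Lemma nuE (S : set (T' * R)) : measurable S -> nu S = (P1 \x P2)%E S.
Proof.
move=> mS; symmetry; apply: product_measure_unique => // A B mA mB.
rewrite /nu /P1 /P2 /distribution /pushforward /=.

exact: indep_sigma.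
Qed.

Lemma fubini_zero (c : nat -> T -> R) (dd : nat) (j0 : 'I_dd) :
  (forall j, measurable_fun (setT : set T') (c j : T' -> R)) ->
  P [set t | \sum_(j < dd) c j t * Z t ^+ j = 0 /\ c j0 t != 0] = 0%E.
Proof.
move=> mc.
pose S : set (T' * R) :=
  [set p | \sum_(j < dd) c j p.1 * p.2 ^+ j = 0 /\ c j0 p.1 != 0].
have mS : measurable S.
  have mf : measurable_fun setT (fun p : T' * R => \sum_(j < dd) c j p.1 * p.2 ^+ j).
    apply: measurable_sum => j; apply: measurable_realfun.measurable_funM.
      by apply: measurableT_comp; [exact: mc|exact: measurable_fst].
    by apply: measurable_realfun.measurable_funX; exact: measurable_snd.
  have mg : measurable_fun setT (fun p : T' * R => c j0 p.1).
    by apply: measurableT_comp; [exact: mc|exact: measurable_fst].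
  have -> : S = ((fun p : T' * R => \sum_(j < dd) c j p.1 * p.2 ^+ j) @^-1` [set 0])
     `&` ((fun p : T' * R => c j0 p.1) @^-1` (~` [set 0])).
    by apply/seteqP; split => p /= [h1 h2]; split => //; apply/eqP.
  apply: measurableI.
    rewrite -[X in measurable X]setTI.
    exact: (mf measurableT _ (measurable_set1 0)).
  rewrite -[X in measurable X]setTI.
  exact: (mg measurableT _ (measurableC (measurable_set1 0))).
have -> : [set t | \sum_(j < dd) c j t * Z t ^+ j = 0 /\ c j0 t != 0] = phi @^-1` S by [].
have -> : P (phi @^-1` S) = nu S by [].
rewrite nuE // /product_measure1.
apply: integral0_eq => x _ /=.
case: (eqVneq (c j0 x) 0) => cx.
  rewrite (_ : xsection S x = set0) ?measure0 //.
  apply/seteqP; split; last exact: sub0set.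
  by move=> z; rewrite /xsection /= inE => -[_]; rewrite cx eqxx.
pose p : {poly R} := \poly_(j < dd) c j x.
have p0 : p != 0.
  apply/eqP => /(congr1 (fun q : {poly R} => q`_j0)).
  by rewrite coef_poly ltn_ord coef0; apply/eqP.
have [s Hs] := finite_roots _ _ p0.
apply/eqP; rewrite eq_le measure_ge0 andbT.
rewrite -(measure_seq0 _ P2 _ s); last first.
  move=> z; rewrite /P2 /distribution /pushforward /=; exact: atomless.
apply: le_measure; rewrite ?inE.
- exact: measurable_xsection.
- have mfin : forall s : seq R, measurable [set z | z \in s].
    elim => [|b s' IHs].
      by rewrite (_ : [set z | z \in [::]] = set0) //; apply/seteqP; split.
    rewrite (_ : [set z | z \in b :: s'] = [set b] `|` [set z | z \in s']).
      by apply: measurableU => //; exact: measurable_set1.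
    apply/seteqP; split => z /=; rewrite in_cons.
      by case/orP => [/eqP ->|]; [left|right].
    by case => [->|->]; rewrite ?eqxx ?orbT.
  exact: mfin.
- move=> z; rewrite /xsection /= inE => -[hz _]; apply: Hs.
  by rewrite /root /p horner_poly; apply/eqP; exact: hz.
Qed.

End FubiniStep.

Lemma zero_set_meas d0 (T0 : measurableType d0) (R : realType) (g : T0 -> R) :
  measurable_fun setT g -> measurable [set t | g t = 0].
Proof.
move=> mg; rewrite -[Y in measurable Y]setTI.
exact: (mg measurableT _ (measurable_set1 0)).
Qed.

Lemma nzero_set_meas d0 (T0 : measurableType d0) (R : realType) (g : T0 -> R) :
  measurable_fun setT g -> measurable [set t | g t != 0].
Proof.
move=> mg; have -> : [set t | g t != 0] = setT `&` g @^-1` (~` [set 0]).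
  by apply/seteqP; split => t /=; [move=> h; split => //; apply/eqP|case=> _ /eqP].
exact: (mg measurableT _ (measurableC (measurable_set1 0))).
Qed.

Section MainInd.
Variables (R : realType) (d : measure_display) (T : measurableType d)
  (P : probability T R).
Variable X : nat -> T -> R.
Variable N : nat.
Hypothesis mX : forall i, measurable_fun setT (X i).
Hypothesis indepX : forall k, (k <= N)%N -> forall B : nat -> set R,
  (forall i, measurable (B i)) -> (forall i, (k <= i)%N -> B i = setT) ->
  P (\bigcap_i X i @^-1` B i) = (\prod_(i < k) P (X i @^-1` B i))%E.
Hypothesis atomX : forall i, (i < N)%N -> forall z, P (X i @^-1` [set z]) = 0%E.

Definition Gk k : set (set T) := [set A | exists B : nat -> set R,
  [/\ (forall i, measurable (B i)), (forall i, (k <= i)%N -> B i = setT)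
    & A = \bigcap_i X i @^-1` B i]].

Lemma Gk_meas k A : Gk k A -> measurable A.
Proof.
move=> [B [mB _ ->]]; apply: bigcapT_measurable => i.
by rewrite -[Y in measurable Y]setTI; apply: mX.
Qed.

Lemma Gk_I k : setI_closed (Gk k).
Proof.
move=> _ _ [B [mB hB ->]] [B' [mB' hB' ->]].
exists (fun i => B i `&` B' i); split.
- by move=> i; exact: measurableI.
- by move=> i ki; rewrite hB // hB' // setIid.
- apply/seteqP; split => t /=.
    by move=> [h1 h2] i _; split; [exact: h1|exact: h2].
  by move=> h; split => i _; have [] := h i I.
Qed.

Lemma Gk_indep k : (k < N)%N -> forall A B, Gk k A -> measurable B ->
  P (A `&` X k @^-1` B) = (P A * P (X k @^-1` B))%E.
Proof.
move=> kN _ B [Bs [mBs hBs ->]] mB.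
pose B' i := if i == k then B else Bs i.
have -> : (\bigcap_i X i @^-1` Bs i) `&` X k @^-1` B = \bigcap_i X i @^-1` B' i.
  apply/seteqP; split => t /=.
    move=> [h1 h2] i _; rewrite /B'; case: eqP => [->|_] //; exact: h1.
  move=> h; split; last by have := h k I; rewrite /B' eqxx.
  move=> i _; case: (eqVneq i k) => [->|ik]; first by rewrite hBs.
  by have := h i I; rewrite /B' (negbTE ik).
have mB' : forall i, measurable (B' i) by move=> i; rewrite /B'; case: eqP.
have hB' : forall i, (k.+1 <= i)%N -> B' i = setT.
  move=> i ki; rewrite /B'; case: eqP => [ik|_]; last by apply: hBs; exact: ltnW.
  by move: ki; rewrite ik ltnn.
rewrite (indepX _ kN B' mB' hB').
rewrite big_ord_recr /= (indepX _ (ltnW kN) Bs mBs hBs).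
rewrite /B' eqxx; congr (_ * _)%E; apply: eq_bigr => i _.
by rewrite (ltn_eqF (ltn_ord i)).
Qed.

Lemma X_meas_Gk k i : (i < k)%N ->
  measurable_fun (setT : set (g_sigma_algebraType (Gk k)))
                 (X i : g_sigma_algebraType (Gk k) -> R).
Proof.
move=> ik _ Y mY; rewrite setTI; apply: sub_sigma_algebra.
exists (fun j => if j == i then Y else setT); split.
- by move=> j; case: eqP.
- move=> j kj; case: eqP => // ji; move: ik; rewrite -ji ltnNge kj.
  by [].
- apply/seteqP; split => t /=.
    by move=> h j _; case: eqP => [->|].
  by move=> h; have := h i I; rewrite eqxx.
Qed.

Lemma poly_null k f x0 : (k <= N)%N -> Poly k f -> f x0 != 0 ->
  P [set t | f (fun i => X i t) = 0] = 0%E.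
Proof.
elim: k f x0 => [|k IH] f x0 kN.
  move=> [c Hc] fx0; rewrite (_ : [set t | _] = set0) ?measure0 //.
  apply/seteqP; split => t //=; rewrite Hc => c0; move: fx0.
  by rewrite Hc c0 eqxx.
move=> Hf; have [dd [q [Hq E]]] := Hf; move=> fx0.
have [j0 hj0] : exists j0 : 'I_dd, q j0 x0 != 0.
  case: (pselect (exists j0 : 'I_dd, q j0 x0 != 0)) => // H.
  exfalso; move: fx0; rewrite E big1 ?eqxx // => j _.
  case: (eqVneq (q j x0) 0) => [->|h]; first by rewrite mul0r.
  by exfalso; apply: H; exists j.
have kN' : (k < N)%N by [].
have E1 : P [set t | q j0 (fun i => X i t) = 0] = 0%E.
  exact: (IH (q j0) x0 (ltnW kN') (Hq j0) hj0).
have E2 : P [set t | \sum_(j < dd) q j (fun i => X i t) * X k t ^+ j = 0 /\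
    q j0 (fun i => X i t) != 0] = 0%E.
  apply: (@fubini_zero R d T P (Gk k) (Gk_meas k) (Gk_I k) (X k) (mX k)
    (Gk_indep k kN') (atomX k kN') (fun j t => q j (fun i => X i t)) dd j0).
  move=> j; apply: Poly_meas; first exact: Hq.
  by move=> i ik; exact: X_meas_Gk.
have mf : measurable_fun setT (fun t => f (fun i => X i t)).
  by apply: (Poly_meas _ _ _ _ _ _ Hf) => i _; exact: mX.
have mq : measurable_fun setT (fun t => q j0 (fun i => X i t)).
  by apply: (Poly_meas _ _ _ _ _ _ (Hq j0)) => i _; exact: mX.
set S0 := [set t | f (fun i => X i t) = 0].
set S1 := [set t | q j0 (fun i => X i t) = 0].
set S2 := [set t | \sum_(j < dd) q j (fun i => X i t) * X k t ^+ j = 0 /\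
    q j0 (fun i => X i t) != 0].
have mS1 : measurable S1 by exact: zero_set_meas.
have mS2 : measurable S2.
  have -> : S2 = [set t | f (fun i => X i t) = 0] `&` [set t | q j0 (fun i => X i t) != 0].
    by apply/seteqP; split => t /= [h1 h2]; split => //; rewrite ?E // -E.
  by apply: measurableI; [exact: zero_set_meas|exact: nzero_set_meas].
have sub : S0 `<=` S1 `|` S2.
  move=> t; rewrite /S0 /S1 /S2 /= => h.
  case: (eqVneq (q j0 (fun i => X i t)) 0) => hq; [left|right] => //.
  by split => //; rewrite -E.
apply/eqP; rewrite eq_le measure_ge0 andbT.
have EE : (P S1 + P S2 = 0)%E by rewrite E1 E2 adde0.
rewrite -EE; apply: le_trans (measureU2 P mS1 mS2).
apply: le_measure => //; rewrite inE //.
- exact: zero_set_meas.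
- exact: measurableU.
Qed.

End MainInd.

From mathcomp Require Import fingroup perm.

Lemma kr_pair_inj n m : injective (@kr_pair n m).
Proof. by move=> r r' /enum_val_inj /cast_ord_inj. Qed.

Lemma L_point (R : realType) n m (D : 'M[R]_(n * m)) (hDdiag : is_diag_mx D)
  (hDnz : forall i, D i i != 0) (w : 'cV[R]_(n * m)) (i r0 : 'I_(n * m))
  (hr0 : w r0 0 != 0) :
  let tau := tperm i r0 in
  let A0 := \matrix_(a < n, k < n * m) ((a == (kr_pair (tau k)).1)%:R : R) in
  let C0 := \matrix_(b < m, k < n * m) ((b == (kr_pair (tau k)).2)%:R : R) in
  let B0 := khatri_rao (A0 *m D) C0 in
  B0 \in unitmx /\ \sum_k \adj B0 i k * w k 0 != 0.
Proof.
move=> tau A0 C0 B0.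
have B0E : forall r k, B0 r k = D k k * (r == tau k)%:R.
  move=> r k; rewrite /B0 /khatri_rao !mxE.
  rewrite (bigD1 k) //= big1 ?addr0; last first.
    move=> l lk; have /is_diag_mxP -> := hDdiag; last by [].
    by rewrite mulr0.
  rewrite !mxE mulrC mulrA mulrC; congr (_ * _).

  rewrite -natrM mulnC mulnb -xpair_eqE -!surjective_pairing.
  by rewrite (inj_eq (@kr_pair_inj n m)).
pose Binv : 'M[R]_(n * m) := \matrix_(k, r) ((r == tau k)%:R / D k k).
have H1 : Binv *m B0 = 1%:M.
  apply/matrixP => k k'; rewrite !mxE.
  rewrite (bigD1 (tau k)) //= big1 ?addr0; last first.
    by move=> r /negbTE rk; rewrite !mxE rk mul0r mul0r.

  rewrite B0E !mxE eqxx (inj_eq (@perm_inj _ tau)).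
  case: (eqVneq k k') => [<-|kk]; last by rewrite !mulr0.
  by rewrite mul1r mulr1 mulVf.
have [Bu B0u] := mulmx1_unit H1.
have H2 := mulmx1C H1.
have invE : invmx B0 = Binv.
  by rewrite -[invmx B0]mulmx1 -H2 mulmxA mulVmx // mul1mx.
split => //.
have detu : \det B0 != 0 by rewrite -unitfE -unitmxE.
have adjE : \adj B0 = \det B0 *: invmx B0.
  by rewrite /invmx B0u scalerA divff // scale1r.
rewrite (eq_bigr (fun k => \det B0 * (Binv i k * w k 0))); last first.
  by move=> k _; rewrite adjE invE mxE mulrA.
rewrite -mulr_sumr mulf_neq0 //.
rewrite (bigD1 (tau i)) //= big1 ?addr0; last first.
  by move=> r /negbTE ri; rewrite mxE ri mul0r mul0r.
rewrite mxE eqxx mul1r /tau tpermL.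
by rewrite mulf_neq0 // invr_neq0.
Qed.

Theorem lemma4p2 (d : measure_display) (T : measurableType d) (R : realType)
  (P : probability T R) (n m : nat) (hn : (0 < n)%N) (hm : (0 < m)%N)
  (Aent : 'I_n -> 'I_(n * m) -> T -> R)
  (Cent : 'I_m -> 'I_(n * m) -> T -> R)
  (hAmeas : forall i k, measurable_fun setT (Aent i k))
  (hCmeas : forall j k, measurable_fun setT (Cent j k))
  (hindep : mutually_independent P
     (fun e : ('I_n * 'I_(n * m)) + ('I_m * 'I_(n * m)) =>
        match e with inl p => Aent p.1 p.2 | inr p => Cent p.1 p.2 end))
  (hAiid : forall i k i' k', same_law P (Aent i k) (Aent i' k'))
  (hCiid : forall j k j' k', same_law P (Cent j k) (Cent j' k'))
  (hAcont : forall i k, continuous_law P (Aent i k))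
  (hCcont : forall j k, continuous_law P (Cent j k))
  (D : 'M[R]_(n * m)) (hDdiag : is_diag_mx D) (hDnz : forall i, D i i != 0)
  (w : 'cV[R]_(n * m)) (hw : w != 0) :
  {ae P, forall t : T,
    let A := \matrix_(i < n, k < n * m) Aent i k t in
    let C := \matrix_(j < m, k < n * m) Cent j k t in
    let B := khatri_rao (A *m D) C in
    B \in unitmx /\
    forall i : 'I_(n * m), \sum_(k < n * m) invmx B i k * w k 0 != 0}.
Proof.
pose Ity : finType := (('I_n * 'I_(n * m)) + ('I_m * 'I_(n * m)))%type.
pose Xfam (e : Ity) : T -> R :=
  match e with inl p => Aent p.1 p.2 | inr p => Cent p.1 p.2 end.
pose N := #|Ity|.
pose X (j : nat) : T -> R :=
  if (insub j : option 'I_N) is Some o then Xfam (enum_val o) else (fun _ => 0).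
have XE : forall e : Ity, X (enum_rank e) = Xfam e.
  by move=> e; rewrite /X valK enum_rankK.
have mXf : forall e, measurable_fun setT (Xfam e).
  by case => -[a k]; [exact: hAmeas|exact: hCmeas].
have mX : forall j, measurable_fun setT (X j).
  move=> j; rewrite /X; case: insubP => [u Pu uj|nP]; first exact: mXf.
  exact: measurable_cst.
have atomX : forall i, (i < N)%N -> forall z, P (X i @^-1` [set z]) = 0%E.
  move=> i iN z; rewrite /X; case: insubP => [u _ _|/negP //].
  by case: (enum_val u) => -[a k]; [exact: hAcont|exact: hCcont].
have indepX : forall k, (k <= N)%N -> forall B : nat -> set R,
    (forall i, measurable (B i)) -> (forall i, (k <= i)%N -> B i = setT) ->
    P (\bigcap_i X i @^-1` B i) = (\prod_(i < k) P (X i @^-1` B i))%E.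
  move=> k kN B mB hB.
  have := hindep (fun e => B (enum_rank e)) (fun e => mB _).
  have setE : \bigcap_i X i @^-1` B i =
      \bigcap_(e in [set: Ity]) (Xfam e) @^-1` B (enum_rank e).
    apply/seteqP; split => t /=.
      by move=> h e _; have := h (enum_rank e) I; rewrite XE.
    move=> h j _; rewrite /X; case: insubP => [u _ uj|jN].
      by have := h (enum_val u) I; rewrite enum_valK -uj.
    rewrite hB //; apply: (leq_trans kN); by rewrite leqNgt.
  rewrite setE => ->.
  rewrite (reindex (fun u : 'I_N => enum_val u)) /=; last first.
    by exists enum_rank => o _; [rewrite enum_valK|rewrite enum_rankK].
  have -> : (\prod_(o : 'I_N) P (Xfam (enum_val o) @^-1` B (enum_rank (enum_val o))))%E
     = (\prod_(o < N) P (X o @^-1` B o))%E.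
    by apply: eq_bigr => o _; rewrite enum_valK /X valK.
  rewrite (big_ord_widen N (fun i => P (X i @^-1` B i)) kN) [RHS]big_mkcond /=.
  apply: eq_bigr => o _; case: ifP => // /negbT; rewrite -leqNgt => ko.
  by rewrite hB // preimage_setT probability_setT.

pose code (e : Ity) : nat := enum_rank e.
have codeN : forall e, (code e < N)%N by move=> e; exact: ltn_ord.
pose Amat (x : nat -> R) : 'M[R]_(n, n * m) :=
  \matrix_(a < n, k < n * m) x (code (inl (a, k))).
pose Cmat (x : nat -> R) : 'M[R]_(m, n * m) :=
  \matrix_(b < m, k < n * m) x (code (inr (b, k))).
pose Bf (x : nat -> R) := khatri_rao (Amat x *m D) (Cmat x).
have PB : forall r k, Poly N (fun x => Bf x r k).
  move=> r k.
  apply: (Poly_ext _ _ (fun x => (\sum_l x (code (inl ((kr_pair r).1, l))) * D l k)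
                * x (code (inr ((kr_pair r).2, k))))).
    move=> x; rewrite /Bf /khatri_rao !mxE; congr (_ * _).
    by apply: eq_bigr => l _; rewrite mxE.
  apply: Poly_mul; last exact: Poly_var.
  apply: Poly_sum => l; apply: Poly_mul; [exact: Poly_var|exact: Poly_cst].
pose fdet (x : nat -> R) := \det (Bf x).
have Pdet : Poly N fdet by apply: Poly_det.
pose gf (i : 'I_(n * m)) (x : nat -> R) := \sum_k \adj (Bf x) i k * w k 0.
have Pg : forall i, Poly N (gf i).
  move=> i; apply: Poly_sum => k; apply: Poly_mul; last exact: Poly_cst.
  apply: (Poly_ext _ _ (fun x => (-1) ^+ (k + i) * \det (row' k (col' i (Bf x))))).
    by move=> x; rewrite mxE.
  apply: Poly_mul; first exact: Poly_cst.
  apply: Poly_det => a b.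
  apply: (Poly_ext _ _ (fun x => Bf x (lift k a) (lift i b))).
    by move=> x; rewrite !mxE.
  exact: PB.
have [r0 hr0] : exists r0, w r0 0 != 0.
  case: (pselect (exists r0, w r0 0 != 0)) => // H; exfalso.
  apply: (negP hw); apply/eqP/matrixP => r c; rewrite (ord1 c) mxE.
  by case: (eqVneq (w r 0) 0) => // h; exfalso; apply: H; exists r.
have point : forall i, exists x0, fdet x0 != 0 /\ gf i x0 != 0.
  move=> i.
  pose tau := tperm i r0.
  pose A0 := \matrix_(a < n, k < n * m) ((a == (kr_pair (tau k)).1)%:R : R).
  pose C0 := \matrix_(b < m, k < n * m) ((b == (kr_pair (tau k)).2)%:R : R).
  pose x0 (j : nat) : R := if (insub j : option 'I_N) is Some u then
      (match enum_val u with inl p => A0 p.1 p.2 | inr p => C0 p.1 p.2 end) else 0.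
  have AE : Amat x0 = A0.
    by apply/matrixP => a k; rewrite [LHS]mxE /x0 /code valK enum_rankK.
  have CE : Cmat x0 = C0.
    by apply/matrixP => a k; rewrite [LHS]mxE /x0 /code valK enum_rankK.
  have [Bu Hg] := L_point _ _ _ _ hDdiag hDnz _ i _ hr0.
  exists x0; rewrite /fdet /gf /Bf AE CE; split => //.
  by rewrite -unitfE -unitmxE.
pose xt (t : T) := fun j => X j t.
have BE : forall t, khatri_rao ((\matrix_(i < n, k < n * m) Aent i k t) *m D)
    (\matrix_(j < m, k < n * m) Cent j k t) = Bf (xt t).
  move=> t; rewrite /Bf; congr (khatri_rao (_ *m D) _);
    by apply/matrixP => a k; rewrite !mxE /xt /code XE.
have nullP : forall f, Poly N f -> (exists x0, f x0 != 0) ->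
    P.-negligible [set t | f (xt t) = 0].
  move=> f Pf [x0 fx0]; apply/negligibleP.
    apply: zero_set_meas; apply: (Poly_meas _ _ _ _ _ _ Pf) => j _; exact: mX.
  exact: (poly_null _ _ _ _ _ _ mX indepX atomX _ _ _ (leqnn N) Pf fx0).
pose S0 := [set t | fdet (xt t) = 0].
pose Si (i : 'I_(n * m)) := [set t | gf i (xt t) = 0].
have N0 : P.-negligible S0.
  apply: nullP => //; have [x0 [h _]] := point r0; by exists x0.
have Ni : forall s : seq 'I_(n * m), P.-negligible (\big[setU/set0]_(i <- s) Si i).
  elim => [|a s IH]; first by rewrite big_nil; exact: negligible_set0.
  rewrite big_cons; apply: negligibleU => //.
  apply: nullP => //; have [x0 [_ h]] := point a; by exists x0.
have Hneg := negligibleU N0 (Ni (enum 'I_(n * m))).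
rewrite /prop_near1 /nbhs /=.
apply: (negligibleS _ Hneg) => t /= nQ.
case: (pselect ((S0 `|` \big[setU/set0]_(i <- enum 'I_(n * m)) Si i) t)) => // Hn.
exfalso; apply: nQ; rewrite /= BE.
have hdet : fdet (xt t) != 0.
  by apply/eqP => h; apply: Hn; left.
have Bu : Bf (xt t) \in unitmx by rewrite unitmxE unitfE.
split => // i.
have hg : gf i (xt t) != 0.
  apply/eqP => h; apply: Hn; right.
  rewrite -bigcup_seq; exists i => //=; exact: mem_enum.
rewrite /invmx Bu.
rewrite (eq_bigr (fun k => (\det (Bf (xt t)))^-1 * (\adj (Bf (xt t)) i k * w k 0))); last first.
  by move=> k _; rewrite mxE mulrA.
by rewrite -mulr_sumr mulf_neq0 // invr_neq0.
Qed.
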